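(* Let $\mathbf{SGr}$ be the category of small symmetric 2-groups and symmetric strong monoidal functors, equipped with the nullhomotopy structure $\Theta$ described in the context. Then the pair (torsion symmetric 2-groups, torsion-free symmetric 2-groups) is a $\Theta$-torsion theory on $\mathbf{SGr}$; that is, (i) for every torsion symmetric 2-group $\mathcal T$, every torsion-free symmetric 2-group $\mathcal F$ and every symmetric monoidal functor $G\colon\mathcal T\to\mathcal F$, $\Theta(G)$ is a singleton, and (ii) every symmetric 2-group $\mathcal G$ sits in a $\Theta$-exact sequence $\mathcal T\xrightarrow{t}\mathcal G\xrightarrow{p}\mathcal F$ with $\mathcal T$ torsion and $\mathcal F$ torsion-free.
   Context: An object $A$ of a monoidal category is weakly invertible if $A\otimes B\cong B\otimes A\cong I$ for some $B$; a symmetric 2-group is a symmetric monoidal groupoid in which all objects are weakly invertible. In a symmetric 2-group, an object $X$ is a torsion object if $X^{\otimes n}\cong I$ for some positive integer $n$ (where $X^{\otimes1}=X$, $X^{\otimes(m+1)}=X\otimes X^{\otimes m}$). A symmetric 2-group is torsion if all its objects are torsion, and torsion-free if for every torsion object $X$ there is exactly one isomorphism $X\to I$. Monoidal functors are strong (coherence maps $e_F\colon I\to F(I)$, $m_F$ invertible). For $F\colon\mathcal M\to\mathcal N$, $\Theta(F)$ is the set of monoidal natural isomorphisms $F\Rightarrow\Delta_{I_{\mathcal N}}$ to the constant functor at the unit; for $P\colon\mathcal M'\to\mathcal M$, $Q\colon\mathcal N\to\mathcal N'$, $\varphi\in\Theta(F)$, $Q\bullet\varphi\bullet P\in\Theta(QFP)$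 has components $e_Q^{-1}\circ Q(\varphi_{PX})$ (written $\varphi\bullet P$, $Q\bullet\varphi$ when one functor is an identity). A $\Theta$-kernel of $F\colon\mathcal M\to\mathcal N$ is a triple $(\mathcal K,k,\theta)$ with $\theta\in\Theta(Fk)$ such that for all $(\mathcal H,h,\varphi)$ with $\varphi\in\Theta(Fh)$ there is a unique $h'$ with $kh'=h$ and $\theta\bullet h'=\varphi$; a $\Theta$-cokernel $(\mathcal C,c,\theta)$, $\theta\in\Theta(cF)$, is such that for all $(\mathcal D,d,\psi)$ with $\psi\in\Theta(dF)$ there is a unique $d'$ with $d'c=d$ and $d'\bullet\theta=\psi$. A $\Theta$-exact sequence $\mathcal X\xrightarrow{f}\mathcal Y\xrightarrow{g}\mathcal Z$ with $\theta\in\Theta(gf)$ is one where $(\mathcal X,f,\theta)$ is a $\Theta$-kernel of $g$ and $(\mathcal Z,g,\theta)$ is a $\Theta$-cokernel of $f$. All objects and functors are in $\mathbf{SGr}$. *)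

(* Defs.v *)
Record SMGpd : Type := {
  ob : Type;
  hom : ob -> ob -> Type;
  cmp : forall x y z : ob, hom y z -> hom x y -> hom x z;
  idm : forall x : ob, hom x x;
  cmpA : forall x y z w (h : hom z w) (g : hom y z) (f : hom x y),
      cmp x z w h (cmp x y z g f) = cmp x y w (cmp y z w h g) f;
  idl : forall x y (f : hom x y), cmp x y y (idm y) f = f;
  idr : forall x y (f : hom x y), cmp x x y f (idm x) = f;
  inv : forall x y, hom x y -> hom y x;
  invl : forall x y (f : hom x y), cmp x y x (inv x y f) f = idm x;
  invr : forall x y (f : hom x y), cmp y x y f (inv x y f) = idm y;
  ten : ob -> ob -> ob;
  tenm : forall x x' y y', hom x x' -> hom y y' -> hom (ten x y) (ten x' y');
  tenm_id : forall x y, tenm x x y y (idm x) (idm y) = idm (ten x y);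
  tenm_cmp : forall x x' x'' y y' y'' (g : hom x' x'') (f : hom x x')
      (g' : hom y' y'') (f' : hom y y'),
      tenm x x'' y y'' (cmp x x' x'' g f) (cmp y y' y'' g' f')
      = cmp _ _ _ (tenm x' x'' y' y'' g g') (tenm x x' y y' f f');
  unitob : ob;
  asc : forall x y z, hom (ten (ten x y) z) (ten x (ten y z));
  asc_nat : forall x x' y y' z z' (f : hom x x') (g : hom y y') (h : hom z z'),
      cmp _ _ _ (asc x' y' z') (tenm _ _ _ _ (tenm _ _ _ _ f g) h)
      = cmp _ _ _ (tenm _ _ _ _ f (tenm _ _ _ _ g h)) (asc x y z);
  lu : forall x, hom (ten unitob x) x;
  lu_nat : forall x y (f : hom x y),
      cmp _ _ _ (lu y) (tenm _ _ _ _ (idm unitob) f) = cmp _ _ _ f (lu x);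
  ru : forall x, hom (ten x unitob) x;
  ru_nat : forall x y (f : hom x y),
      cmp _ _ _ (ru y) (tenm _ _ _ _ f (idm unitob)) = cmp _ _ _ f (ru x);
  sy : forall x y, hom (ten x y) (ten y x);
  sy_nat : forall x x' y y' (f : hom x x') (g : hom y y'),
      cmp _ _ _ (sy x' y') (tenm _ _ _ _ f g) = cmp _ _ _ (tenm _ _ _ _ g f) (sy x y);
  pentagon : forall w x y z,
      cmp _ _ _ (asc w x (ten y z)) (asc (ten w x) y z)
      = cmp _ _ _ (tenm _ _ _ _ (idm w) (asc x y z))
          (cmp _ _ _ (asc w (ten x y) z) (tenm _ _ _ _ (asc w x y) (idm z)));
  triangle : forall x y,
      cmp _ _ _ (tenm _ _ _ _ (idm x) (lu y)) (asc x unitob y)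
      = tenm _ _ _ _ (ru x) (idm y);
  hexagon : forall x y z,
      cmp _ _ _ (asc y z x) (cmp _ _ _ (sy x (ten y z)) (asc x y z))
      = cmp _ _ _ (tenm _ _ _ _ (idm y) (sy x z))
          (cmp _ _ _ (asc y x z) (tenm _ _ _ _ (sy x y) (idm z)));
  sy_invol : forall x y, cmp _ _ _ (sy y x) (sy x y) = idm (ten x y)
}.

Arguments hom {s} _ _.
Arguments cmp {s x y z} _ _.
Arguments idm {s} _.
Arguments inv {s x y} _.
Arguments ten {s} _ _.
Arguments tenm {s x x' y y'} _ _.
Arguments unitob {s}.
Arguments asc {s} _ _ _.
Arguments lu {s} _.
Arguments ru {s} _.
Arguments sy {s} _ _.

Declare Scope sg_scope.
Notation "g ∘ f" := (cmp g f) (at level 40, left associativity) : sg_scope.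
Notation "x ⊗ y" := (ten x y) (at level 35, right associativity) : sg_scope.
Open Scope sg_scope.

Definition isIso {G : SMGpd} {x y : ob G} (f : hom x y) : Prop :=
  exists g : hom y x, g ∘ f = idm x /\ f ∘ g = idm y.

Definition Iso {G : SMGpd} (x y : ob G) : Prop :=
  exists f : hom x y, isIso f.

Definition weakly_invertible {G : SMGpd} (A : ob G) : Prop :=
  exists B : ob G, Iso (A ⊗ B) unitob /\ Iso (B ⊗ A) unitob.

Record SG : Type := {
  sg_gpd :> SMGpd;
  sg_winv : forall A : ob sg_gpd, weakly_invertible A
}.

(* X^{⊗1} = X, X^{⊗(m+1)} = X ⊗ X^{⊗m}  (value at 0 is never used). *)
Fixpoint tpow {G : SMGpd} (X : ob G) (n : nat) : ob G :=
  match n with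
  | O => unitob
  | S O => X
  | S m => X ⊗ tpow X m
  end.

Definition torsion_obj {G : SMGpd} (X : ob G) : Prop :=
  exists n : nat, 1 <= n /\ Iso (tpow X n) unitob.

Definition is_torsion (G : SMGpd) : Prop :=
  forall X : ob G, torsion_obj X.

Definition is_torsion_free (G : SMGpd) : Prop :=
  forall X : ob G, torsion_obj X ->
    exists f : hom X unitob, isIso f /\ forall g : hom X unitob, isIso g -> g = f.

(* Functors: data, and the predicate of being symmetric (strong)       *)
(* monoidal.  Strongness (invertibility of e, m) is automatic since    *)
(* the target is a groupoid.                                           *)
Record Fun (M N : SMGpd) : Type := {
  fo : ob M -> ob N;
  fm : forall x y : ob M, hom x y -> hom (fo x) (fo y);
  fe : hom (@unitob N) (fo unitob);
  fmu : forall x y : ob M, hom (fo x ⊗ fo y) (fo (x ⊗ y))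
}.
Arguments fo {M N} _ _.
Arguments fm {M N} _ {x y} _.
Arguments fe {M N} _.
Arguments fmu {M N} _ _ _.

Definition is_smf {M N : SMGpd} (F : Fun M N) : Prop :=
  (forall x, fm F (idm x) = idm (fo F x)) /\
  (forall x y z (g : hom y z) (f : hom x y), fm F (g ∘ f) = fm F g ∘ fm F f) /\
  (forall x x' y y' (f : hom x x') (g : hom y y'),
      fmu F x' y' ∘ tenm (fm F f) (fm F g) = fm F (tenm f g) ∘ fmu F x y) /\
  (forall x y z,
      fm F (asc x y z) ∘ fmu F (x ⊗ y) z ∘ tenm (fmu F x y) (idm (fo F z))
      = fmu F x (y ⊗ z) ∘ tenm (idm (fo F x)) (fmu F y z)
          ∘ asc (fo F x) (fo F y) (fo F z)) /\
  (forall x, fm F (lu x) ∘ fmu F unitob x ∘ tenm (fe F) (idm (fo F x))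
             = lu (fo F x)) /\
  (forall x, fm F (ru x) ∘ fmu F x unitob ∘ tenm (idm (fo F x)) (fe F)
             = ru (fo F x)) /\
  (forall x y, fm F (sy x y) ∘ fmu F x y = fmu F y x ∘ sy (fo F x) (fo F y)).

Definition compF {M N P : SMGpd} (G : Fun N P) (F : Fun M N) : Fun M P := {|
  fo := fun x => fo G (fo F x);
  fm := fun x y f => fm G (fm F f);
  fe := fm G (fe F) ∘ fe G;
  fmu := fun x y => fm G (fmu F x y) ∘ fmu G (fo F x) (fo F y)
|}.

(* Theta(F): monoidal natural isomorphisms F => Delta_I, where Delta_I *)
(* is the constant functor at the unit (fm = id, e = id_I,             *)
(* m = lambda_I : I ⊗ I -> I).  Invertibility of components is         *)
(* automatic in a groupoid.                                            *)
Definition ThetaData {M N : SMGpd} (F : Fun M N) : Type :=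
  forall x : ob M, hom (fo F x) (@unitob N).

Definition is_theta {M N : SMGpd} (F : Fun M N) (phi : ThetaData F) : Prop :=
  (forall x y (f : hom x y), idm unitob ∘ phi x = phi y ∘ fm F f) /\
  (forall x y, phi (x ⊗ y) ∘ fmu F x y = lu unitob ∘ tenm (phi x) (phi y)) /\
  (phi unitob ∘ fe F = idm unitob).

Definition lwhisk {M' M N : SMGpd} {F : Fun M N} (phi : ThetaData F) (P : Fun M' M)
  : ThetaData (compF F P) := fun x => phi (fo P x).

Definition rwhisk {M N N' : SMGpd} (Q : Fun N N') {F : Fun M N} (phi : ThetaData F)
  : ThetaData (compF Q F) := fun x => inv (fe Q) ∘ fm Q (phi x).

(* The equality "theta • h' = phi" lives in Theta(F k h') = Theta(F h) *)
(* (the functors being equal); it is expressed as an equality of       *)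
(* dependent pairs.                                                    *)
Definition theta_kernel {M N : SG} (F : Fun M N)
    (K : SG) (k : Fun K M) (theta : ThetaData (compF F k)) : Prop :=
  is_smf k /\ is_theta (compF F k) theta /\
  forall (H : SG) (h : Fun H M) (phi : ThetaData (compF F h)),
    is_smf h -> is_theta (compF F h) phi ->
    exists h' : Fun H K,
      (is_smf h' /\ compF k h' = h /\
       existT (@ThetaData H N) (compF (compF F k) h') (lwhisk theta h')
       = existT (@ThetaData H N) (compF F h) phi) /\
      forall h'' : Fun H K,
        is_smf h'' -> compF k h'' = h ->
        existT (@ThetaData H N) (compF (compF F k) h'') (lwhisk theta h'')
        = existT (@ThetaData H N) (compF F h) phi ->
        h'' = h'.

Definition theta_cokernel {M N : SG} (F : Fun M N)
    (C : SG) (c : Fun N C) (theta : ThetaData (compF c F)) : Prop :=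
  is_smf c /\ is_theta (compF c F) theta /\
  forall (D : SG) (d : Fun N D) (psi : ThetaData (compF d F)),
    is_smf d -> is_theta (compF d F) psi ->
    exists d' : Fun C D,
      (is_smf d' /\ compF d' c = d /\
       existT (@ThetaData M D) (compF d' (compF c F)) (rwhisk d' theta)
       = existT (@ThetaData M D) (compF d F) psi) /\
      forall d'' : Fun C D,
        is_smf d'' -> compF d'' c = d ->
        existT (@ThetaData M D) (compF d'' (compF c F)) (rwhisk d'' theta)
        = existT (@ThetaData M D) (compF d F) psi ->
        d'' = d'.

Definition theta_exact {X Y Z : SG} (f : Fun X Y) (g : Fun Y Z)
    (theta : ThetaData (compF g f)) : Prop :=
  theta_kernel g X f theta /\ theta_cokernel f Z g theta.

(* Main.v *)
Require Import Defs.
From Stdlib Require Import ProofIrrelevance FunctionalExtensionality ClassicalEpsilon Eqdep Lia PeanoNat Arith.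

Lemma cA {G : SMGpd} {x y z w : ob G} (h : hom z w) (g : hom y z) (f : hom x y) :
  h ∘ (g ∘ f) = h ∘ g ∘ f.
Proof. apply cmpA. Qed.
Lemma cl {G : SMGpd} {x y : ob G} (f : hom x y) : idm y ∘ f = f.
Proof. apply idl. Qed.
Lemma cr {G : SMGpd} {x y : ob G} (f : hom x y) : f ∘ idm x = f.
Proof. apply idr. Qed.
Lemma iL {G : SMGpd} {x y : ob G} (f : hom x y) : inv f ∘ f = idm x.
Proof. apply invl. Qed.
Lemma iR {G : SMGpd} {x y : ob G} (f : hom x y) : f ∘ inv f = idm y.
Proof. apply invr. Qed.
Lemma iL' {G : SMGpd} {w x y : ob G} (f : hom x y) (g : hom w x) : inv f ∘ (f ∘ g) = g.
Proof. rewrite cA, iL, cl; reflexivity. Qed.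
Lemma iR' {G : SMGpd} {w x y : ob G} (f : hom x y) (g : hom w y) : f ∘ (inv f ∘ g) = g.
Proof. rewrite cA, iR, cl; reflexivity. Qed.
Lemma iLa {G : SMGpd} {w x y : ob G} (f : hom x y) (g : hom x w) : g ∘ inv f ∘ f = g.
Proof. rewrite <- cA, iL, cr; reflexivity. Qed.
Lemma iRa {G : SMGpd} {w x y : ob G} (f : hom x y) (g : hom y w) : g ∘ f ∘ inv f = g.
Proof. rewrite <- cA, iR, cr; reflexivity. Qed.
Lemma tI {G : SMGpd} (x y : ob G) : tenm (idm x) (idm y) = idm (x ⊗ y).
Proof. apply tenm_id. Qed.
Lemma tC {G : SMGpd} {x x' x'' y y' y'' : ob G} (g : hom x' x'') (f : hom x x')
      (g' : hom y' y'') (f' : hom y y') :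
  tenm (g ∘ f) (g' ∘ f') = tenm g g' ∘ tenm f f'.
Proof. apply tenm_cmp. Qed.

Lemma cancel_l {G : SMGpd} {w x y : ob G} (f : hom x y) (g1 g2 : hom w x) :
  f ∘ g1 = f ∘ g2 -> g1 = g2.
Proof. intro H. rewrite <- (iL' f g1), H, iL'. reflexivity. Qed.
Lemma cancel_r {G : SMGpd} {w x y : ob G} (f : hom x y) (g1 g2 : hom y w) :
  g1 ∘ f = g2 ∘ f -> g1 = g2.
Proof. intro H. rewrite <- (iRa f g1), H, iRa. reflexivity. Qed.

Lemma inv_uniq {G : SMGpd} {x y : ob G} (f : hom x y) (g : hom y x) :
  g ∘ f = idm x -> inv f = g.
Proof. intro H. apply (cancel_r f). rewrite iL, H; reflexivity. Qed.

Lemma inv_cmp {G : SMGpd} {x y z : ob G} (g : hom y z) (f : hom x y) :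
  inv (g ∘ f) = inv f ∘ inv g.
Proof. apply inv_uniq. rewrite cA, <- (cA (inv f)), iL, cr, iL. reflexivity. Qed.
Lemma inv_idm {G : SMGpd} (x : ob G) : inv (idm x) = idm x.
Proof. apply inv_uniq. apply cl. Qed.
Lemma inv_inv {G : SMGpd} {x y : ob G} (f : hom x y) : inv (inv f) = f.
Proof. apply inv_uniq. apply iR. Qed.
Lemma inv_tenm {G : SMGpd} {x x' y y' : ob G} (f : hom x x') (g : hom y y') :
  inv (tenm f g) = tenm (inv f) (inv g).
Proof. apply inv_uniq. rewrite <- tC, !iL, tI. reflexivity. Qed.

Lemma mv_l {G : SMGpd} {w x y : ob G} (f : hom x y) (g : hom w x) (h : hom w y) :
  g = inv f ∘ h -> f ∘ g = h.
Proof. intros ->. apply iR'. Qed.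
Lemma mv_r {G : SMGpd} {w x y : ob G} (f : hom x y) (g : hom y w) (h : hom x w) :
  g = h ∘ inv f -> g ∘ f = h.
Proof. intros ->. apply iLa. Qed.

Lemma tenm_split {G : SMGpd} {x x' y y' : ob G} (f : hom x x') (g : hom y y') :
  tenm f g = tenm f (idm y') ∘ tenm (idm x) g.
Proof. rewrite <- tC, cl, cr. reflexivity. Qed.
Lemma tenm_split' {G : SMGpd} {x x' y y' : ob G} (f : hom x x') (g : hom y y') :
  tenm f g = tenm (idm x') g ∘ tenm f (idm y).
Proof. rewrite <- tC, cl, cr. reflexivity. Qed.

Lemma lu_faithful {G : SMGpd} {x y : ob G} (u v : hom x y) :
  tenm (idm unitob) u = tenm (idm unitob) v -> u = v.
Proof.
  intro H. apply (cancel_r (lu x)).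
  rewrite <- !lu_nat, H. reflexivity.
Qed.

Lemma ru_faithful {G : SMGpd} {x y : ob G} (u v : hom x y) :
  tenm u (idm unitob) = tenm v (idm unitob) -> u = v.
Proof.
  intro H. apply (cancel_r (ru x)).
  rewrite <- !ru_nat, H. reflexivity.
Qed.

Lemma kelly {G : SMGpd} (x y : ob G) :
  lu (x ⊗ y) ∘ asc unitob x y = tenm (lu x) (idm y).
Proof.
  apply lu_faithful.
  apply (cancel_r (asc unitob (unitob ⊗ x) y ∘ tenm (asc unitob unitob x) (idm y))).
  assert (E1 : tenm (idm unitob) (lu (x ⊗ y) ∘ asc unitob x y)
               = tenm (idm unitob) (lu (x ⊗ y)) ∘ tenm (idm unitob) (asc unitob x y)).
  { rewrite <- tC, cl. reflexivity. }
  rewrite E1, <- cA, <- pentagon, cA, triangle.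
  rewrite <- (tI x y), <- asc_nat.
  rewrite <- triangle.
  assert (E2 : tenm (tenm (idm unitob) (lu x) ∘ asc unitob unitob x) (idm y)
     = tenm (tenm (idm unitob) (lu x)) (idm y) ∘ tenm (asc unitob unitob x) (idm y)).
  { rewrite <- tC, cl. reflexivity. }
  rewrite E2, !cA. f_equal. apply asc_nat.
Qed.

Lemma lu_I_ru_I {G : SMGpd} : lu (@unitob G) = ru unitob.
Proof.
  apply ru_faithful.
  rewrite <- triangle, <- kelly.
  f_equal.
  apply (cancel_l (lu unitob)).
  rewrite lu_nat. reflexivity.
Qed.

Lemma isIso_all {G : SMGpd} {x y : ob G} (f : hom x y) : isIso f.
Proof. exists (inv f). split; [apply iL | apply iR]. Qed.
Lemma Iso_of {G : SMGpd} {x y : ob G} (f : hom x y) : Iso x y.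
Proof. exists f. apply isIso_all. Qed.
Lemma Iso_refl {G : SMGpd} (x : ob G) : Iso x x.
Proof. apply (Iso_of (idm x)). Qed.
Lemma Iso_sym {G : SMGpd} {x y : ob G} : Iso x y -> Iso y x.
Proof. intros [f _]. apply (Iso_of (inv f)). Qed.
Lemma Iso_trans {G : SMGpd} {x y z : ob G} : Iso x y -> Iso y z -> Iso x z.
Proof. intros [f _] [g _]. apply (Iso_of (g ∘ f)). Qed.
Lemma Iso_ten {G : SMGpd} {x x' y y' : ob G} : Iso x x' -> Iso y y' -> Iso (x ⊗ y) (x' ⊗ y').
Proof. intros [f _] [g _]. apply (Iso_of (tenm f g)). Qed.
Lemma Iso_asc {G : SMGpd} (x y z : ob G) : Iso ((x ⊗ y) ⊗ z) (x ⊗ (y ⊗ z)).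
Proof. apply (Iso_of (asc x y z)). Qed.
Lemma Iso_lu {G : SMGpd} (x : ob G) : Iso (unitob ⊗ x) x.
Proof. apply (Iso_of (lu x)). Qed.
Lemma Iso_ru {G : SMGpd} (x : ob G) : Iso (x ⊗ unitob) x.
Proof. apply (Iso_of (ru x)). Qed.
Lemma Iso_sy {G : SMGpd} (x y : ob G) : Iso (x ⊗ y) (y ⊗ x).
Proof. apply (Iso_of (sy x y)). Qed.

Ltac itrans y := apply (Iso_trans (y := y)).

Lemma Iso_mid {G : SMGpd} (a b c d : ob G) : Iso ((a ⊗ b) ⊗ (c ⊗ d)) ((a ⊗ c) ⊗ (b ⊗ d)).
Proof.
  itrans (a ⊗ (b ⊗ (c ⊗ d))). apply Iso_asc.
  itrans (a ⊗ (c ⊗ (b ⊗ d))).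
  2: apply Iso_sym, Iso_asc.
  apply Iso_ten. apply Iso_refl.
  itrans ((b ⊗ c) ⊗ d). apply Iso_sym, Iso_asc.
  itrans ((c ⊗ b) ⊗ d). apply Iso_ten. apply Iso_sy. apply Iso_refl.
  apply Iso_asc.
Qed.

Fixpoint q {G : SMGpd} (a : ob G) (n : nat) : ob G :=
  match n with O => unitob | S m => a ⊗ q a m end.

Lemma tpow_q {G : SMGpd} (a : ob G) n : 1 <= n -> Iso (tpow a n) (q a n).
Proof.
  induction n as [|n IH]; intro H. lia.
  destruct n as [|n].
  - simpl. apply Iso_sym, Iso_ru.
  - change (Iso (a ⊗ tpow a (S n)) (a ⊗ q a (S n))).
    apply Iso_ten. apply Iso_refl. apply IH. lia.
Qed.

Lemma torsion_q {G : SMGpd} (a : ob G) :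
  torsion_obj a <-> exists n, 1 <= n /\ Iso (q a n) unitob.
Proof.
  split; intros [n [Hn H]]; exists n; split; auto.
  - apply (Iso_trans (Iso_sym (tpow_q a n Hn)) H).
  - apply (Iso_trans (tpow_q a n Hn) H).
Qed.

Lemma q_iso {G : SMGpd} (a b : ob G) n : Iso a b -> Iso (q a n) (q b n).
Proof.
  intro H. induction n; simpl. apply Iso_refl. apply Iso_ten; auto.
Qed.

Lemma q_add {G : SMGpd} (a : ob G) n m : Iso (q a (n + m)) (q a n ⊗ q a m).
Proof.
  induction n; simpl. apply Iso_sym, Iso_lu.
  itrans (a ⊗ (q a n ⊗ q a m)). apply Iso_ten; [apply Iso_refl | auto].
  apply Iso_sym, Iso_asc.
Qed.

Lemma q_mul {G : SMGpd} (a : ob G) n m : Iso (q a (n * m)) (q (q a n) m).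
Proof.
  induction m; simpl.
  - rewrite Nat.mul_0_r. apply Iso_refl.
  - rewrite Nat.mul_succ_r.
    itrans (q a (n * m) ⊗ q a n). apply q_add.
    itrans (q a n ⊗ q a (n * m)). apply Iso_sy.
    apply Iso_ten. apply Iso_refl. auto.
Qed.

Lemma q_ten {G : SMGpd} (a b : ob G) n : Iso (q (a ⊗ b) n) (q a n ⊗ q b n).
Proof.
  induction n; simpl. apply Iso_sym, Iso_lu.
  itrans ((a ⊗ b) ⊗ (q a n ⊗ q b n)). apply Iso_ten; [apply Iso_refl | auto].
  apply Iso_mid.
Qed.

Lemma q_I {G : SMGpd} n : Iso (q (@unitob G) n) unitob.
Proof.
  induction n; simpl. apply Iso_refl.
  itrans (@unitob G ⊗ unitob). apply Iso_ten; [apply Iso_refl | auto]. apply Iso_lu.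
Qed.

Lemma tors_iso {G : SMGpd} (a b : ob G) : Iso a b -> torsion_obj b -> torsion_obj a.
Proof.
  intros H Hb. apply torsion_q in Hb. apply torsion_q.
  destruct Hb as [n [Hn Hb]]. exists n. split; auto.
  apply (Iso_trans (q_iso a b n H) Hb).
Qed.

Lemma tors_I {G : SMGpd} : torsion_obj (@unitob G).
Proof. exists 1. split; auto. apply Iso_refl. Qed.

Lemma tors_isoI {G : SMGpd} (a : ob G) : Iso a unitob -> torsion_obj a.
Proof. intro H. exists 1. split; auto. Qed.

Lemma tors_ten {G : SMGpd} (a b : ob G) :
  torsion_obj a -> torsion_obj b -> torsion_obj (a ⊗ b).
Proof.
  intros Ha Hb. apply torsion_q in Ha, Hb. apply torsion_q.
  destruct Ha as [n [Hn Ha]], Hb as [m [Hm Hb]].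
  exists (n * m). split. nia.
  itrans (q a (n * m) ⊗ q b (n * m)). apply q_ten.
  itrans (@unitob G ⊗ unitob). 2: apply Iso_lu.
  apply Iso_ten.
  - itrans (q (q a n) m). apply q_mul.
    itrans (q (@unitob G) m). apply q_iso; auto. apply q_I.
  - rewrite Nat.mul_comm.
    itrans (q (q b m) n). apply q_mul.
    itrans (q (@unitob G) n). apply q_iso; auto. apply q_I.
Qed.

Lemma tors_inv {G : SMGpd} (a b : ob G) :
  torsion_obj a -> Iso (a ⊗ b) unitob -> torsion_obj b.
Proof.
  intros Ha H. apply torsion_q in Ha. apply torsion_q.
  destruct Ha as [n [Hn Ha]]. exists n. split; auto.
  itrans (@unitob G ⊗ q b n). apply Iso_sym, Iso_lu.
  itrans (q a n ⊗ q b n). apply Iso_ten. apply Iso_sym, Ha. apply Iso_refl.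
  itrans (q (a ⊗ b) n). apply Iso_sym, q_ten.
  itrans (q (@unitob G) n). apply q_iso; auto. apply q_I.
Qed.

Lemma tors_pow {G : SMGpd} (a : ob G) n : 1 <= n -> torsion_obj (q a n) -> torsion_obj a.
Proof.
  intros Hn H. apply torsion_q in H. apply torsion_q.
  destruct H as [m [Hm H]]. exists (n * m). split. nia.
  apply (Iso_trans (q_mul a n m) H).
Qed.

Lemma smf_q {M N : SMGpd} (F : Fun M N) (a : ob M) n :
  Iso (fo F (q a n)) (q (fo F a) n).
Proof.
  induction n; simpl. apply Iso_sym, (Iso_of (fe F)).
  itrans (fo F a ⊗ fo F (q a n)). apply Iso_sym, (Iso_of (fmu F _ _)).
  apply Iso_ten; [apply Iso_refl | auto].
Qed.

Lemma smf_tors {M N : SMGpd} (F : Fun M N) (a : ob M) :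
  torsion_obj a -> torsion_obj (fo F a).
Proof.
  intro H. apply torsion_q in H. apply torsion_q.
  destruct H as [n [Hn [f _]]]. exists n. split; auto.
  itrans (fo F (q a n)). apply Iso_sym, smf_q.
  itrans (fo F unitob). apply (Iso_of (fm F f)).
  apply Iso_sym, (Iso_of (fe F)).
Qed.

Lemma tf_uniq {G : SMGpd} (HG : is_torsion_free G) (x : ob G) (Hx : torsion_obj x)
  (f g : hom x unitob) : f = g.
Proof.
  destruct (HG x Hx) as [h [_ U]].
  rewrite (U f (isIso_all f)), (U g (isIso_all g)). reflexivity.
Qed.

Lemma part1 : forall (T F : SG) (G : Fun T F),
      is_torsion T -> is_torsion_free F -> is_smf G ->
      exists phi : ThetaData G,
        is_theta G phi /\ forall psi : ThetaData G, is_theta G psi -> psi = phi.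
Proof.
  intros T F G HT HF HG.
  assert (Ht : forall x, torsion_obj (fo G x)) by (intro; apply smf_tors, HT).
  set (phi := fun x => proj1_sig (constructive_indefinite_description _ (HF _ (Ht x)))).
  exists phi. split.
  - split; [|split].
    + intros. apply (tf_uniq HF _ (Ht x)).
    + intros. apply (tf_uniq HF). apply tors_ten; auto.
    + apply (tf_uniq HF). apply tors_I.
  - intros psi _. apply functional_extensionality_dep. intro x.
    apply (tf_uniq HF _ (Ht x)).
Qed.

Definition R {G : SMGpd} (x y : ob G) : Prop :=
  exists t, torsion_obj t /\ Iso x (t ⊗ y).

Lemma R_of {G : SMGpd} {x y : ob G} (f : hom x y) : R x y.
Proof.
  exists unitob. split. apply tors_I.
  itrans y. apply (Iso_of f). apply Iso_sym, Iso_lu.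
Qed.

Lemma R_cmp {G : SMGpd} {x y z : ob G} : R y z -> R x y -> R x z.
Proof.
  intros [s [Hs Hy]] [t [Ht Hx]]. exists (t ⊗ s). split. apply tors_ten; auto.
  itrans (t ⊗ y). auto.
  itrans (t ⊗ (s ⊗ z)). apply Iso_ten; [apply Iso_refl | auto].
  apply Iso_sym, Iso_asc.
Qed.

Lemma R_inv {G : SG} {x y : ob G} : R x y -> R y x.
Proof.
  intros [t [Ht Hx]]. destruct (sg_winv G t) as [t' [H1 H2]].
  exists t'. split. apply (tors_inv t); auto.
  itrans (unitob ⊗ y). apply Iso_sym, Iso_lu.
  itrans ((t' ⊗ t) ⊗ y). apply Iso_ten; [apply Iso_sym; auto | apply Iso_refl].
  itrans (t' ⊗ (t ⊗ y)). apply Iso_asc.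
  apply Iso_ten; [apply Iso_refl | apply Iso_sym; auto].
Qed.

Lemma R_ten {G : SMGpd} {x x' y y' : ob G} : R x x' -> R y y' -> R (x ⊗ y) (x' ⊗ y').
Proof.
  intros [t [Ht Hx]] [s [Hs Hy]]. exists (t ⊗ s). split. apply tors_ten; auto.
  itrans ((t ⊗ x') ⊗ (s ⊗ y')). apply Iso_ten; auto.
  apply Iso_mid.
Qed.

Lemma R_tors {G : SMGpd} {x : ob G} : torsion_obj x -> R x unitob.
Proof. intro H. exists x. split; auto. apply Iso_sym, Iso_ru. Qed.

Lemma R_I_tors {G : SMGpd} {x : ob G} : R x unitob -> torsion_obj x.
Proof.
  intros [t [Ht H]]. apply (tors_iso x t); auto.
  apply (Iso_trans H (Iso_ru t)).
Qed.

Definition Fgpd (G : SG) : SMGpd.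
Proof.
  refine {| ob := ob G; hom := fun x y => R x y;
            cmp := fun x y z g f => R_cmp g f;
            idm := fun x => R_of (idm x);
            inv := fun x y f => R_inv f;
            ten := fun x y => x ⊗ y;
            tenm := fun x x' y y' f g => R_ten f g;
            unitob := unitob;
            asc := fun x y z => R_of (asc x y z);
            lu := fun x => R_of (lu x);
            ru := fun x => R_of (ru x);
            sy := fun x y => R_of (sy x y) |};
  intros; apply proof_irrelevance.
Defined.

Lemma tpow_F (G : SG) (X : ob G) n : @tpow (Fgpd G) X n = tpow X n.
Proof.
  induction n as [|n IH]. reflexivity.
  destruct n. reflexivity.
  change (X ⊗ @tpow (Fgpd G) X (S n) = X ⊗ tpow X (S n)). rewrite IH. reflexivity.
Qed.

Lemma Fgpd_winv (G : SG) (A : ob (Fgpd G)) : weakly_invertible A.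
Proof.
  destruct (sg_winv G A) as [B [[f _] [g _]]].
  exists B. split.
  - exists (R_of f : hom (s := Fgpd G) _ _). apply isIso_all.
  - exists (R_of g : hom (s := Fgpd G) _ _). apply isIso_all.
Qed.

Definition FSG (G : SG) : SG := {| sg_gpd := Fgpd G; sg_winv := Fgpd_winv G |}.

Lemma FSG_tf (G : SG) : is_torsion_free (FSG G).
Proof.
  intros X [n [Hn [f _]]].
  simpl in f. rewrite tpow_F in f.
  assert (HX : torsion_obj (G := G) X).
  { apply (tors_pow (G := G) X n Hn). apply (tors_iso (G := G) _ (tpow (G := G) X n)).
    apply Iso_sym, (tpow_q (G := G)); auto. apply R_I_tors. exact f. }
  exists (R_tors HX : hom (s := FSG G) X unitob). split. apply isIso_all.
  intros. cbn in *. apply proof_irrelevance.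
Qed.

Definition Tob (G : SMGpd) := {x : ob G | torsion_obj x}.

Definition Tgpd (G : SMGpd) : SMGpd.
Proof.
  refine {| ob := Tob G; hom := fun a b => hom (proj1_sig a) (proj1_sig b);
            cmp := fun a b c g f => g ∘ f;
            idm := fun a => idm (proj1_sig a);
            inv := fun a b f => inv f;
            ten := fun a b => exist _ (proj1_sig a ⊗ proj1_sig b)
                                (tors_ten _ _ (proj2_sig a) (proj2_sig b));
            tenm := fun a a' b b' f g => tenm f g;
            unitob := exist _ unitob tors_I;
            asc := fun a b c => asc (proj1_sig a) (proj1_sig b) (proj1_sig c);
            lu := fun a => lu (proj1_sig a);
            ru := fun a => ru (proj1_sig a);
            sy := fun a b => sy (proj1_sig a) (proj1_sig b) |}; intros.
  all: first [apply cmpA | apply idl | apply idr | apply invl | apply invr | apply tenm_id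
        | apply tenm_cmp | apply asc_nat | apply lu_nat | apply ru_nat | apply sy_nat
        | apply pentagon | apply triangle | apply hexagon | apply sy_invol].
Defined.

Lemma tpow_T (G : SMGpd) (X : ob (Tgpd G)) n :
  proj1_sig (@tpow (Tgpd G) X n) = tpow (proj1_sig X) n.
Proof.
  induction n as [|n IH]. reflexivity.
  destruct n. reflexivity.
  change (proj1_sig X ⊗ proj1_sig (@tpow (Tgpd G) X (S n)) = proj1_sig X ⊗ tpow (proj1_sig X) (S n)).
  rewrite IH. reflexivity.
Qed.

Lemma Iso_T (G : SMGpd) (a b : ob (Tgpd G)) : Iso a b <-> Iso (proj1_sig a) (proj1_sig b).
Proof. split; intro H; exact H. Qed.

Lemma Tgpd_winv (G : SG) (A : ob (Tgpd G)) : weakly_invertible A.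
Proof.
  destruct A as [x Hx].
  destruct (sg_winv G x) as [B [H1 H2]].
  exists (exist _ B (tors_inv x B Hx H1)). split; apply Iso_T; simpl; auto.
Qed.

Definition TSG (G : SG) : SG := {| sg_gpd := Tgpd G; sg_winv := Tgpd_winv G |}.

Lemma TSG_tors (G : SG) : is_torsion (TSG G).
Proof.
  intros [x Hx]. destruct Hx as [n [Hn H]].
  exists n. split; auto. apply Iso_T. simpl sg_gpd. rewrite tpow_T. exact H.
Qed.

Lemma pi_F (G : SG) (x y : ob G) (a b : hom (s := FSG G) x y) : a = b.
Proof. exact (proof_irrelevance (R x y) a b). Qed.

Definition tfun (G : SG) : Fun (TSG G) G :=
  Build_Fun (TSG G) G (fun a : Tob G => proj1_sig a) (fun a b f => f) (idm unitob)
    (fun a b => idm (proj1_sig a ⊗ proj1_sig b)).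

Definition pfun (G : SG) : Fun G (FSG G) :=
  Build_Fun G (FSG G) (fun x : ob G => x) (fun (x y : ob G) (f : hom x y) => R_of f)
    (R_of (idm (@unitob G))) (fun x y : ob G => R_of (idm (x ⊗ y))).

Definition thetaG (G : SG) : ThetaData (compF (pfun G) (tfun G)) :=
  fun a => R_tors (proj2_sig a).

Lemma tfun_smf (G : SG) : is_smf (tfun G).
Proof.
  repeat split; intros; simpl; rewrite ?tI, ?cl, ?cr; reflexivity.
Qed.

Lemma pfun_smf (G : SG) : is_smf (pfun G).
Proof. repeat split; intros; apply pi_F. Qed.

Lemma thetaG_theta (G : SG) : is_theta _ (thetaG G).
Proof. repeat split; intros; apply pi_F. Qed.

Lemma exT_eq {M N : SMGpd} (F1 F2 : Fun M N) (a : ThetaData F1) (b : ThetaData F2) :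
  F1 = F2 ->
  existT (fun f : ob M -> ob N => forall x, hom (f x) unitob) (fo F1) a
  = existT (fun f : ob M -> ob N => forall x, hom (f x) unitob) (fo F2) b ->
  existT (@ThetaData M N) F1 a = existT _ F2 b.
Proof.
  intros e. subst F2. intro H. apply inj_pair2 in H. subst. reflexivity.
Qed.

Lemma exT_proj {M N : SMGpd} (F1 F2 : Fun M N) (a : ThetaData F1) (b : ThetaData F2) :
  existT (@ThetaData M N) F1 a = existT _ F2 b ->
  existT (fun f : ob M -> ob N => forall x, hom (f x) unitob) (fo F1) a
  = existT (fun f : ob M -> ob N => forall x, hom (f x) unitob) (fo F2) b.
Proof.
  intro H.
  apply (f_equal (fun s : {F : Fun M N & ThetaData F} =>
    existT (fun f : ob M -> ob N => forall x, hom (f x) unitob) (fo (projT1 s)) (projT2 s)) H).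
Qed.

Lemma Fun_F_eq {M : SMGpd} (G : SG) (F1 F2 : Fun M (FSG G)) : fo F1 = fo F2 -> F1 = F2.
Proof.
  destruct F1 as [fo1 fm1 fe1 fmu1], F2 as [fo2 fm2 fe2 fmu2]; simpl; intro e; subst fo2.
  f_equal.
  - apply functional_extensionality_dep; intro x.
    apply functional_extensionality_dep; intro y.
    apply functional_extensionality_dep; intro f. apply pi_F.
  - apply pi_F.
  - apply functional_extensionality_dep; intro x.
    apply functional_extensionality_dep; intro y. apply pi_F.
Qed.

Definition mkT {G : SG} {H : SMGpd} (h : Fun H G) (P : forall x, torsion_obj (fo h x))
  : Fun H (TSG G) :=
  Build_Fun H (TSG G) (fun x => exist _ (fo h x) (P x)) (fun x y f => fm h f) (fe h) (fmu h).

Lemma ker_fac (G : SG) (H : SMGpd) (h : Fun H G) (P : forall x, torsion_obj (fo h x)) :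
  compF (tfun G) (mkT h P) = h.
Proof.
  destruct h as [fo1 fm1 fe1 fmu1]. unfold compF, mkT. simpl.
  rewrite cr. f_equal.
  apply functional_extensionality_dep; intro x.
  apply functional_extensionality_dep; intro y. apply cr.
Qed.

Lemma ker_uniq (G : SG) (H : SMGpd) (k : Fun H (TSG G))
  (P : forall x, torsion_obj (fo (compF (tfun G) k) x)) :
  mkT (compF (tfun G) k) P = k.
Proof.
  destruct k as [fo1 fm1 fe1 fmu1]. unfold compF, mkT. simpl in *.
  rewrite cr.
  assert (E : (fun x y => fmu1 x y ∘ idm _) = fmu1).
  { apply functional_extensionality_dep; intro x.
    apply functional_extensionality_dep; intro y. apply cr. }
  rewrite E. clear E.
  assert (Eeta : (fun x => exist _ (proj1_sig (fo1 x)) (proj2_sig (fo1 x))) = fo1).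
  { apply functional_extensionality; intro x. destruct (fo1 x); reflexivity. }
  revert P fm1 fe1 fmu1. rewrite <- Eeta. intros P fm1 fe1 fmu1.
  assert (EP : P = fun x => proj2_sig (fo1 x)).
  { apply functional_extensionality_dep; intro x. apply proof_irrelevance. }
  subst P. reflexivity.
Qed.

Lemma kernel_part (G : SG) : theta_kernel (pfun G) (TSG G) (tfun G) (thetaG G).
Proof.
  split. apply tfun_smf. split. apply thetaG_theta.
  intros H h phi Hh Hphi.
  assert (P : forall x, torsion_obj (fo h x)).
  { intro x. apply R_I_tors. exact (phi x). }
  exists (mkT h P). split.
  - split. { exact Hh. }
    split. { apply ker_fac. }
    apply exT_eq. apply Fun_F_eq. reflexivity.
    apply (f_equal (existT _ _)).
    apply functional_extensionality_dep; intro x. apply pi_F.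
  - intros h'' Hs Hc _. subst h. symmetry. apply ker_uniq.
Qed.

Lemma lift2 {G : SMGpd} {x y z w : ob G} (X : hom y z) (Y : hom x y) (Z : hom x z) (W : hom z w) :
  X ∘ Y = Z -> W ∘ X ∘ Y = W ∘ Z.
Proof. intros <-. symmetry. apply cA. Qed.
Lemma lift3 {G : SMGpd} {x0 x y z w : ob G} (X : hom y z) (Y : hom x y) (Y0 : hom x0 x)
  (Z : hom x0 z) (W : hom z w) :
  X ∘ Y ∘ Y0 = Z -> W ∘ X ∘ Y ∘ Y0 = W ∘ Z.
Proof. intros <-. rewrite !cA. reflexivity. Qed.
Lemma cong_r {G : SMGpd} {x y z : ob G} (A B : hom y z) (K : hom x y) : A = B -> A ∘ K = B ∘ K.
Proof. intros ->; reflexivity. Qed.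
Lemma cong_l {G : SMGpd} {x y z : ob G} (A B : hom x y) (K : hom y z) : A = B -> K ∘ A = K ∘ B.
Proof. intros ->; reflexivity. Qed.

Ltac nrm := repeat rewrite cA.
Ltac rw E := nrm; first [rewrite E | rewrite (lift2 _ _ _ _ E) | rewrite (lift3 _ _ _ _ _ E)]; nrm.

Lemma tm_swap {G : SMGpd} {a a' b b' : ob G} (f : hom a a') (g : hom b b') :
  tenm (idm a') g ∘ tenm f (idm b) = tenm f (idm b') ∘ tenm (idm a) g.
Proof. rewrite <- tenm_split, <- tenm_split'. reflexivity. Qed.

Lemma tm_l {G : SMGpd} {a a' a'' b : ob G} (f : hom a' a'') (g : hom a a') :
  tenm f (idm b) ∘ tenm g (idm b) = tenm (f ∘ g) (idm b).
Proof. rewrite <- tC, cl. reflexivity. Qed.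
Lemma tm_r {G : SMGpd} {a a' a'' b : ob G} (f : hom a' a'') (g : hom a a') :
  tenm (idm b) f ∘ tenm (idm b) g = tenm (idm b) (f ∘ g).
Proof. rewrite <- tC, cl. reflexivity. Qed.

Lemma coh1 {D : SMGpd} (a b c e : ob D) (al : hom a unitob) (be : hom b unitob)
  (k : hom e (b ⊗ c)) :
  lu c ∘ tenm (lu unitob ∘ tenm al be) (idm c) ∘ inv (asc a b c) ∘ tenm (idm a) k
  = lu c ∘ tenm be (idm c) ∘ k ∘ lu e ∘ tenm al (idm e).
Proof.
  assert (E1 : k ∘ lu e = lu (b ⊗ c) ∘ tenm (idm unitob) k) by (symmetry; apply lu_nat).
  assert (E2 : tenm (idm unitob) k ∘ tenm al (idm e) = tenm al (idm (b ⊗ c)) ∘ tenm (idm a) k)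
    by apply tm_swap.
  assert (E3 : tenm be (idm c) ∘ lu (b ⊗ c) = lu (unitob ⊗ c) ∘ tenm (idm unitob) (tenm be (idm c)))
    by (symmetry; apply lu_nat).
  assert (E4 : tenm (idm unitob) (tenm be (idm c)) ∘ tenm al (idm (b ⊗ c))
               = tenm al (tenm be (idm c))) by (rewrite <- tC, cl, cr; reflexivity).
  assert (E5 : tenm (lu unitob ∘ tenm al be) (idm c)
               = tenm (lu unitob) (idm c) ∘ tenm (tenm al be) (idm c)) by (rewrite <- tC, cl; reflexivity).
  assert (E6 : tenm (tenm al be) (idm c) ∘ inv (asc a b c)
               = inv (asc unitob unitob c) ∘ tenm al (tenm be (idm c))).
  { apply (cancel_l (asc unitob unitob c)). rewrite iR'. rewrite cA, asc_nat, iRa. reflexivity. }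
  assert (E7 : tenm (lu unitob) (idm c) ∘ inv (asc unitob unitob c) = lu (unitob ⊗ c)).
  { rewrite <- kelly, iRa. reflexivity. }
  rw E1. rw E2. rw E3. rw E4. rewrite E5. rw E6. rw E7. reflexivity.
Qed.

Lemma coh2 {D : SMGpd} (a u v w : ob D) (ps : hom a unitob) (m : hom (u ⊗ v) w) :
  m ∘ tenm (lu u) (idm v) ∘ tenm (tenm ps (idm u)) (idm v)
  = lu w ∘ tenm ps (idm w) ∘ tenm (idm a) m ∘ asc a u v.
Proof.
  assert (E1 : tenm ps (idm w) ∘ tenm (idm a) m = tenm (idm unitob) m ∘ tenm ps (idm (u ⊗ v)))
    by (symmetry; apply tm_swap).
  assert (E2 : lu w ∘ tenm (idm unitob) m = m ∘ lu (u ⊗ v)) by apply lu_nat.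
  assert (E3 : tenm ps (idm (u ⊗ v)) ∘ asc a u v = asc unitob u v ∘ tenm (tenm ps (idm u)) (idm v)).
  { rewrite asc_nat, tI. reflexivity. }
  assert (E4 : lu (u ⊗ v) ∘ asc unitob u v = tenm (lu u) (idm v)) by apply kelly.
  rw E1. rw E2. rw E3. rw E4. reflexivity.
Qed.

Lemma dfaith (D : SG) (v w : ob D) (u : hom v v) : tenm u (idm w) = idm _ -> u = idm v.
Proof.
  intro H.
  destruct (sg_winv D w) as [w' [[e _] _]].
  assert (H1 : tenm u (idm (w ⊗ w')) = idm _).
  { apply (cancel_r (asc v w w')).
    rewrite <- (tI w w'), <- asc_nat, H, !tI, cl, cr. reflexivity. }
  assert (H2 : tenm u (idm unitob) = idm _).
  { apply (cancel_r (tenm (idm v) e)).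
    rewrite cl, <- tenm_split, tenm_split', H1, cr. reflexivity. }
  apply (cancel_r (ru v)). rewrite <- ru_nat, H2, cl, cr. reflexivity.
Qed.

Lemma fm_inv {M N : SMGpd} (F : Fun M N) (HF : is_smf F) {x y : ob M} (f : hom x y) :
  fm F (inv f) = inv (fm F f).
Proof.
  destruct HF as (Hid & Hcmp & _).
  symmetry. apply inv_uniq. rewrite <- Hcmp, iL, Hid. reflexivity.
Qed.

Lemma collapse_endo (G D : SG) (d : Fun G D) (Hd : is_smf d)
  (psi : ThetaData (compF d (tfun G))) (Hpsi : is_theta _ psi)
  (a : ob G) (h : hom a a) : fm d h = idm _.
Proof.
  destruct Hd as (Hid & Hcmp & Hnat & Hasc & Hlu & Hru & Hsy).
  destruct Hpsi as (Pnat & Pmon & Pe).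
  destruct (sg_winv G a) as [a' [H1 _]].
  set (z := exist _ (a ⊗ a') (tors_isoI _ H1) : ob (TSG G)).
  assert (E : fm d (tenm h (idm a')) = idm _).
  { pose proof (Pnat z z (tenm h (idm a'))) as P. simpl in P. rewrite cl in P.
    apply (cancel_l (psi z)). rewrite cr. symmetry; exact P. }
  pose proof (Hnat a a a' a' h (idm a')) as N. rewrite Hid, E, cl in N.
  apply (dfaith D _ (fo d a')).
  apply (cancel_l (fmu d a a')). rewrite cr. exact N.
Qed.

Lemma collapse (G D : SG) (d : Fun G D) (Hd : is_smf d)
  (psi : ThetaData (compF d (tfun G))) (Hpsi : is_theta _ psi)
  (a b : ob G) (g1 g2 : hom a b) : fm d g1 = fm d g2.
Proof.
  assert (E : g1 = g2 ∘ (inv g2 ∘ g1)) by (rewrite iR'; reflexivity).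
  rewrite E. rewrite (proj1 (proj2 Hd)), (collapse_endo G D d Hd psi Hpsi), cr. reflexivity.
Qed.

Lemma Iso_cancel (G : SG) (t t' y : ob G) : Iso (t ⊗ y) (t' ⊗ y) -> Iso t t'.
Proof.
  intro H. destruct (sg_winv G y) as [y' [H1 _]].
  itrans (t ⊗ unitob). apply Iso_sym, Iso_ru.
  itrans (t ⊗ (y ⊗ y')). apply Iso_ten. apply Iso_refl. apply Iso_sym, H1.
  itrans ((t ⊗ y) ⊗ y'). apply Iso_sym, Iso_asc.
  itrans ((t' ⊗ y) ⊗ y'). apply Iso_ten. exact H. apply Iso_refl.
  itrans (t' ⊗ (y ⊗ y')). apply Iso_asc.
  itrans (t' ⊗ unitob). apply Iso_ten. apply Iso_refl. exact H1.
  apply Iso_ru.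
Qed.

Definition Psi {G D : SG} (d : Fun G D) (psi : ThetaData (compF d (tfun G))) {x y : ob G}
  (t : ob G) (tt : torsion_obj t) (f : hom x (t ⊗ y)) : hom (fo d x) (fo d y) :=
  lu (fo d y) ∘ tenm (psi (exist (fun x => torsion_obj x) t tt)) (idm (fo d y))
     ∘ inv (fmu d t y) ∘ fm d f.

Lemma mu_nat_inv {M N : SMGpd} (F : Fun M N) (HF : is_smf F) {x x' y : ob M} (s : hom x x') :
  inv (fmu F x' y) ∘ fm F (tenm s (idm y)) = tenm (fm F s) (idm _) ∘ inv (fmu F x y).
Proof.
  destruct HF as (Hid & Hcmp & Hnat & _).
  pose proof (Hnat x x' y y s (idm y)) as Nn. rewrite Hid in Nn.
  assert (E : fm F (tenm s (idm y)) = fmu F x' y ∘ tenm (fm F s) (idm _) ∘ inv (fmu F x y)).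
  { rewrite Nn, iRa. reflexivity. }
  rewrite E. nrm. rewrite iL, cl. reflexivity.
Qed.

Lemma Psi_indep (G D : SG) (d : Fun G D) (Hd : is_smf d)
  (psi : ThetaData (compF d (tfun G))) (Hpsi : is_theta _ psi)
  (x y t t' : ob G) (tt : torsion_obj t) (tt' : torsion_obj t')
  (f : hom x (t ⊗ y)) (f' : hom x (t' ⊗ y)) :
  Psi d psi t tt f = Psi d psi t' tt' f'.
Proof.
  destruct (Iso_cancel G t t' y (Iso_of (f' ∘ inv f))) as [s _].
  assert (E1 : fm d f' = fm d (tenm s (idm y)) ∘ fm d f).
  { rewrite <- (proj1 (proj2 Hd)). apply (collapse G D d Hd psi Hpsi). }
  pose proof (mu_nat_inv d Hd (y := y) s) as E2.
  assert (E3 : psi (exist (fun x => torsion_obj x) t' tt') ∘ fm d s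
               = psi (exist (fun x => torsion_obj x) t tt)).
  { destruct Hpsi as (Pnat & _). 
    pose proof (Pnat (exist (fun x => torsion_obj x) t tt) (exist (fun x => torsion_obj x) t' tt') s) as P.
    simpl in P. rewrite cl in P. symmetry. exact P. }
  unfold Psi. rewrite E1. rw E2. rw (tm_l (G := D) (b := fo d y) (psi (exist (fun x => torsion_obj x) t' tt')) (fm d s)). rewrite E3. reflexivity.
Qed.

Definition Phi {G D : SG} (d : Fun G D) (psi : ThetaData (compF d (tfun G))) (x y : ob G)
  (r : R x y) : hom (fo d x) (fo d y) :=
  let s := constructive_indefinite_description _ r in
  let f := constructive_indefinite_description _ (proj2 (proj2_sig s)) in
  Psi d psi (proj1_sig s) (proj1 (proj2_sig s)) (proj1_sig f).

Lemma Phi_spec (G D : SG) (d : Fun G D) (Hd : is_smf d)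
  (psi : ThetaData (compF d (tfun G))) (Hpsi : is_theta _ psi)
  (x y : ob G) (r : R x y) (t : ob G) (tt : torsion_obj t) (f : hom x (t ⊗ y)) :
  Phi d psi x y r = Psi d psi t tt f.
Proof. unfold Phi. apply Psi_indep; assumption. Qed.

Lemma inv3 {G : SMGpd} {w x y z : ob G} (A : hom y z) (B : hom x y) (C : hom w x) (L : hom w z) :
  A ∘ B ∘ C = L -> inv B ∘ inv A = C ∘ inv L.
Proof. intro H. rewrite <- H, !inv_cmp. rewrite iR'. reflexivity. Qed.

Lemma Phi_p (G D : SG) (d : Fun G D) (Hd : is_smf d)
  (psi : ThetaData (compF d (tfun G))) (Hpsi : is_theta _ psi)
  (x y : ob G) (r : R x y) (g : hom x y) : Phi d psi x y r = fm d g.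
Proof.
  rewrite (Phi_spec G D d Hd psi Hpsi x y r unitob tors_I (inv (lu y) ∘ g)).
  pose proof Hd as Hd'.
  destruct Hd' as (Hid & Hcmp & Hnat & Hasc & Hlu & Hru & Hsy).
  destruct Hpsi as (Pnat & Pmon & Pe).
  assert (Pe' : psi (exist (fun x => torsion_obj x) unitob tors_I) ∘ fe d = idm _).
  { pose proof Pe as P. simpl in P. rewrite Hid, cl in P. exact P. }
  pose proof (inv3 _ _ _ _ (Hlu y)) as E.
  unfold Psi. rewrite Hcmp, (fm_inv d Hd). rw E.
  rw (tm_l (G := D) (b := fo d y) (psi (exist (fun x => torsion_obj x) unitob tors_I)) (fe d)).
  rewrite Pe', tI, cr, iR, cl. reflexivity.
Qed.

Lemma Phi_pi (G D : SG) (d : Fun G D) (psi : ThetaData (compF d (tfun G)))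
  (x y : ob G) (r r' : R x y) : Phi d psi x y r = Phi d psi x y r'.
Proof. rewrite (proof_irrelevance _ r r'). reflexivity. Qed.

Lemma mu_nat_inv_r {M N : SMGpd} (F : Fun M N) (HF : is_smf F) {x y y' : ob M} (s : hom y y') :
  inv (fmu F x y') ∘ fm F (tenm (idm x) s) = tenm (idm _) (fm F s) ∘ inv (fmu F x y).
Proof.
  destruct HF as (Hid & Hcmp & Hnat & _).
  pose proof (Hnat x x y y' (idm x) s) as Nn. rewrite Hid in Nn.
  assert (E : fm F (tenm (idm x) s) = fmu F x y' ∘ tenm (idm _) (fm F s) ∘ inv (fmu F x y)).
  { rewrite Nn, iRa. reflexivity. }
  rewrite E. nrm. rewrite iL, cl. reflexivity.
Qed.

Lemma Phi_cmp (G D : SG) (d : Fun G D) (Hd : is_smf d)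
  (psi : ThetaData (compF d (tfun G))) (Hpsi : is_theta _ psi)
  (x y z : ob G) (r1 : R x y) (r2 : R y z) (r : R x z) :
  Phi d psi x z r = Phi d psi y z r2 ∘ Phi d psi x y r1.
Proof.
  pose proof r1 as [t [tt [f _]]]. pose proof r2 as [s [ts [g _]]].
  rewrite (Phi_spec G D d Hd psi Hpsi x y r1 t tt f),
          (Phi_spec G D d Hd psi Hpsi y z r2 s ts g),
          (Phi_spec G D d Hd psi Hpsi x z r (t ⊗ s) (tors_ten t s tt ts)
             (inv (asc t s z) ∘ tenm (idm t) g ∘ f)).
  pose proof Hd as Hd'.
  destruct Hd' as (Hid & Hcmp & Hnat & Hasc & Hlu & Hru & Hsy).
  destruct Hpsi as (Pnat & Pmon & Pe).
  pose proof (Pmon (exist (fun x => torsion_obj x) t tt) (exist (fun x => torsion_obj x) s ts)) as Pm.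
  simpl in Pm. rewrite Hid, cl in Pm.
  pose proof (inv3 _ _ _ _ (Hasc t s z)) as E1.
  rewrite !inv_cmp, inv_tenm, inv_idm in E1.
  pose proof (mu_nat_inv_r d Hd (x := t) g) as E2.
  unfold Psi. rewrite !Hcmp, (fm_inv d Hd).
  rw E1. rw E2.
  rw (tm_l (G := D) (b := fo d z)
        (psi (exist (fun x0 : ob G => torsion_obj x0) (t ⊗ s) (tors_ten t s tt ts))) (fmu d t s)).
  assert (Pm' : psi (exist (fun x0 : ob G => torsion_obj x0) (t ⊗ s) (tors_ten t s tt ts)) ∘ fmu d t s =
    lu unitob ∘ tenm (psi (exist (fun x : ob G => torsion_obj x) t tt))
        (psi (exist (fun x : ob G => torsion_obj x) s ts))) by exact Pm.
  rewrite Pm'.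
  rw (tm_r (G := D) (b := fo d t) (inv (fmu d s z)) (fm d g)).
  apply cong_r, cong_r.
  rewrite coh1. nrm. reflexivity.
Qed.

Lemma Phi_ten1 (G D : SG) (d : Fun G D) (Hd : is_smf d)
  (psi : ThetaData (compF d (tfun G))) (Hpsi : is_theta _ psi)
  (x x' y : ob G) (r : R x x') (r' : R (x ⊗ y) (x' ⊗ y)) :
  fmu d x' y ∘ tenm (Phi d psi x x' r) (idm (fo d y)) = Phi d psi _ _ r' ∘ fmu d x y.
Proof.
  pose proof r as [t [tt [f _]]].
  rewrite (Phi_spec G D d Hd psi Hpsi x x' r t tt f),
          (Phi_spec G D d Hd psi Hpsi _ _ r' t tt (asc t x' y ∘ tenm f (idm y))).
  pose proof Hd as Hd'.
  destruct Hd' as (Hid & Hcmp & Hnat & Hasc & Hlu & Hru & Hsy).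
  assert (E1 : fm d (tenm f (idm y)) ∘ fmu d x y = fmu d (t ⊗ x') y ∘ tenm (fm d f) (idm _)).
  { rewrite <- Hnat, Hid. reflexivity. }
  assert (E2 : fm d (asc t x' y) ∘ fmu d (t ⊗ x') y
     = fmu d t (x' ⊗ y) ∘ tenm (idm _) (fmu d x' y) ∘ asc _ _ _ ∘ inv (tenm (fmu d t x') (idm _))).
  { rewrite <- Hasc, iRa. reflexivity. }
  unfold Psi. rewrite Hcmp.
  rw E1. rw E2. rewrite iLa.
  rewrite inv_tenm, inv_idm.
  rewrite <- !tm_l. nrm.
  apply cong_r, cong_r. apply coh2.
Qed.

Lemma Phi_ten (G D : SG) (d : Fun G D) (Hd : is_smf d)
  (psi : ThetaData (compF d (tfun G))) (Hpsi : is_theta _ psi)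
  (x x' y y' : ob G) (r1 : R x x') (r2 : R y y') (r : R (x ⊗ y) (x' ⊗ y')) :
  fmu d x' y' ∘ tenm (Phi d psi x x' r1) (Phi d psi y y' r2) = Phi d psi _ _ r ∘ fmu d x y.
Proof.
  pose proof Hd as Hd'.
  destruct Hd' as (Hid & Hcmp & Hnat & Hasc & Hlu & Hru & Hsy).
  set (ra := R_ten r1 (R_of (idm y'))).
  set (rb := R_ten r2 (R_of (idm x))).
  set (s1 := @R_of G _ _ (sy y' x)).
  set (s2 := @R_of G _ _ (sy x y)).
  assert (E1 : tenm (idm (fo d x)) (Phi d psi y y' r2)
      = sy (fo d y') (fo d x) ∘ tenm (Phi d psi y y' r2) (idm (fo d x)) ∘ sy (fo d x) (fo d y)).
  { rewrite sy_nat, <- cA, sy_invol, cr. reflexivity. }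
  assert (E2 : fmu d x y' ∘ sy (fo d y') (fo d x) = fm d (sy y' x) ∘ fmu d y' x)
    by (symmetry; apply Hsy).
  assert (E3 : fmu d y x ∘ sy (fo d x) (fo d y) = fm d (sy x y) ∘ fmu d x y)
    by (symmetry; apply Hsy).
  pose proof (Phi_ten1 G D d Hd psi Hpsi x x' y' r1 ra) as E4.
  pose proof (Phi_ten1 G D d Hd psi Hpsi y y' x r2 rb) as E5.
  rewrite tenm_split. rw E4. rewrite E1. rw E2. rw E5. rw E3.
  rewrite <- (Phi_p G D d Hd psi Hpsi _ _ s1), <- (Phi_p G D d Hd psi Hpsi _ _ s2).
  rewrite <- (Phi_cmp G D d Hd psi Hpsi _ _ _ s1 ra (R_cmp ra s1)).
  rewrite <- (Phi_cmp G D d Hd psi Hpsi _ _ _ rb (R_cmp ra s1) (R_cmp (R_cmp ra s1) rb)).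
  rewrite <- (Phi_cmp G D d Hd psi Hpsi _ _ _ s2 (R_cmp (R_cmp ra s1) rb) r).
  reflexivity.
Qed.

Lemma Phi_theta (G D : SG) (d : Fun G D) (Hd : is_smf d)
  (psi : ThetaData (compF d (tfun G))) (Hpsi : is_theta _ psi)
  (x : ob G) (tx : torsion_obj x) (r : R x unitob) :
  Phi d psi x unitob r = fe d ∘ psi (exist (fun x => torsion_obj x) x tx).
Proof.
  rewrite (Phi_spec G D d Hd psi Hpsi x unitob r x tx (inv (ru x))).
  pose proof Hd as Hd'.
  destruct Hd' as (Hid & Hcmp & Hnat & Hasc & Hlu & Hru & Hsy).
  pose proof (inv3 _ _ _ _ (Hru x)) as E.
  unfold Psi. rewrite (fm_inv d Hd). rw E.
  rewrite <- (cA _ (tenm _ (idm _))), <- tm_swap. nrm.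
  rewrite lu_nat. nrm.
  rewrite lu_I_ru_I. rw (ru_nat D _ _ (psi (exist (fun x0 : ob G => torsion_obj x0) x tx))).
  rewrite iRa. reflexivity.
Qed.

Definition dprime (G D : SG) (d : Fun G D) (psi : ThetaData (compF d (tfun G))) : Fun (FSG G) D :=
  Build_Fun (FSG G) D (fo d) (fun x y r => Phi d psi x y r) (fe d) (fmu d).

Lemma dprime_smf (G D : SG) (d : Fun G D) (Hd : is_smf d)
  (psi : ThetaData (compF d (tfun G))) (Hpsi : is_theta _ psi) : is_smf (dprime G D d psi).
Proof.
  pose proof Hd as Hd'.
  destruct Hd' as (Hid & Hcmp & Hnat & Hasc & Hlu & Hru & Hsy).
  unfold dprime. repeat split; intros; cbn -[Phi].
  - rewrite (Phi_p G D d Hd psi Hpsi _ _ _ (@idm G x)). apply Hid.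
  - apply Phi_cmp; assumption.
  - apply Phi_ten; assumption.
  - rewrite (Phi_p G D d Hd psi Hpsi _ _ _ (@asc G x y z)). apply Hasc.
  - rewrite (Phi_p G D d Hd psi Hpsi _ _ _ (@lu G x)). apply Hlu.
  - rewrite (Phi_p G D d Hd psi Hpsi _ _ _ (@ru G x)). apply Hru.
  - rewrite (Phi_p G D d Hd psi Hpsi _ _ _ (@sy G x y)). apply Hsy.
Qed.

Lemma dprime_fac (G D : SG) (d : Fun G D) (Hd : is_smf d)
  (psi : ThetaData (compF d (tfun G))) (Hpsi : is_theta _ psi) :
  compF (dprime G D d psi) (pfun G) = d.
Proof.
  transitivity (Build_Fun G D (fo d) (@fm _ _ d) (fe d) (fmu d)); [| destruct d; reflexivity].
  pose proof Hd as Hd'.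
  destruct Hd' as (Hid & Hcmp & Hnat & Hasc & Hlu & Hru & Hsy).
  unfold compF, dprime. cbn -[Phi].
  rewrite (Phi_p G D d Hd psi Hpsi _ _ _ (idm unitob)), Hid, cl.
  assert (E1 : (fun x y (f : hom x y) => Phi d psi x y (R_of f)) = @fm _ _ d).
  { apply functional_extensionality_dep; intro x.
    apply functional_extensionality_dep; intro y.
    apply functional_extensionality_dep; intro f. apply Phi_p; assumption. }
  assert (E2 : (fun x y => Phi d psi (x ⊗ y) (x ⊗ y) (R_of (idm (x ⊗ y))) ∘ fmu d x y) = fmu d).
  { apply functional_extensionality_dep; intro x.
    apply functional_extensionality_dep; intro y.
    rewrite (Phi_p G D d Hd psi Hpsi _ _ _ (idm _)), Hid, cl. reflexivity. }
  rewrite E1, E2. reflexivity.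
Qed.

Lemma dprime_theta (G D : SG) (d : Fun G D) (Hd : is_smf d)
  (psi : ThetaData (compF d (tfun G))) (Hpsi : is_theta _ psi) :
  existT (@ThetaData (TSG G) D) (compF (dprime G D d psi) (compF (pfun G) (tfun G)))
    (rwhisk (dprime G D d psi) (thetaG G))
  = existT (@ThetaData (TSG G) D) (compF d (tfun G)) psi.
Proof.
  pose proof Hd as Hd'.
  destruct Hd' as (Hid & Hcmp & Hnat & Hasc & Hlu & Hru & Hsy).
  apply exT_eq.
  - unfold compF, dprime. cbn -[Phi].
    rewrite !(Phi_p G D d Hd psi Hpsi _ _ _ (idm _)).
    assert (E1 : (fun (x y : Tob G) (f : hom (proj1_sig x) (proj1_sig y)) =>
                   Phi d psi (proj1_sig x) (proj1_sig y) (R_of f))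
                 = (fun x y f => fm d f)).
    { apply functional_extensionality_dep; intro x.
      apply functional_extensionality_dep; intro y.
      apply functional_extensionality_dep; intro f. apply Phi_p; assumption. }
    rewrite E1. f_equal.
    apply functional_extensionality_dep; intro x.
    apply functional_extensionality_dep; intro y.
    rewrite (Phi_p G D d Hd psi Hpsi _ _ _ (idm _)). reflexivity.
  - apply (f_equal (existT _ _)).
    apply functional_extensionality_dep; intros [x tx].
    unfold rwhisk, dprime. cbn -[Phi].
    rewrite (Phi_theta G D d Hd psi Hpsi x tx). apply iL'.
Qed.

Lemma dprime_uniq (G D : SG) (d'' : Fun (FSG G) D) (Hs : is_smf d'')
  (psi : ThetaData (compF (compF d'' (pfun G)) (tfun G)))
  (Hd : is_smf (compF d'' (pfun G))) (Hpsi : is_theta _ psi)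
  (Hex : existT (@ThetaData (TSG G) D) (compF d'' (compF (pfun G) (tfun G))) (rwhisk d'' (thetaG G))
         = existT (@ThetaData (TSG G) D) (compF (compF d'' (pfun G)) (tfun G)) psi) :
  d'' = dprime G D (compF d'' (pfun G)) psi.
Proof.
  apply exT_proj in Hex. apply inj_pair2 in Hex.
  destruct Hs as (Hid & Hcmp & Hnat & Hasc & Hlu & Hru & Hsy).
  assert (Eid : forall x : ob G, @fm _ _ d'' x x (R_of (idm x)) = idm (fo d'' x))
    by (intro x; exact (Hid x)).
  assert (Ecmp : forall (x y z : ob G) (g : R y z) (f : R x y),
             @fm _ _ d'' x z (R_cmp g f) = @fm _ _ d'' y z g ∘ @fm _ _ d'' x y f)
    by (intros; exact (Hcmp x y z g f)).
  assert (Eten : forall (x x' y y' : ob G) (f : R x x') (g : R y y'),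
     fmu d'' x' y' ∘ tenm (@fm _ _ d'' x x' f) (@fm _ _ d'' y y' g)
     = @fm _ _ d'' (x ⊗ y) (x' ⊗ y') (R_ten f g) ∘ fmu d'' x y)
    by (intros; exact (Hnat x x' y y' f g)).
  assert (Elu : forall x : ob G, @fm _ _ d'' _ _ (R_of (lu x)) ∘ fmu d'' unitob x
                  ∘ tenm (fe d'') (idm (fo d'' x)) = lu (fo d'' x))
    by (intro x; exact (Hlu x)).
  assert (Eth : forall (t : ob G) (tt : torsion_obj t),
             @fm _ _ d'' t unitob (R_tors tt) = fe d'' ∘ psi (exist (fun x => torsion_obj x) t tt)).
  { intros t tt.
    pose proof (f_equal (fun F => F (exist (fun x => torsion_obj x) t tt)) Hex) as H.
    cbv beta in H. unfold rwhisk, thetaG in H. simpl in H. rewrite <- H, iR'. reflexivity. }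
  assert (E_fmu : forall a b : ob G, fmu (compF d'' (pfun G)) a b = fmu d'' a b).
  { intros a b. simpl. rewrite Eid, cl. reflexivity. }
  assert (E_fe : fe (compF d'' (pfun G)) = fe d'').
  { simpl. rewrite Eid, cl. reflexivity. }
  transitivity (Build_Fun (FSG G) D (fo d'') (@fm _ _ d'') (fe d'') (fmu d''));
    [destruct d''; reflexivity |].
  unfold dprime.
  assert (E_fm : (fun (x y : ob (FSG G)) (r : hom x y) => Phi (compF d'' (pfun G)) psi x y r) = @fm _ _ d'').
  { apply functional_extensionality_dep; intro x.
    apply functional_extensionality_dep; intro y.
    apply functional_extensionality_dep; intro r.
    change (ob G) in x. change (ob G) in y.
    change (@R G x y) in r.
    pose proof r as [t [tt [f _]]].
    rewrite (Phi_spec G D (compF d'' (pfun G)) Hd psi Hpsi x y r t tt f). unfold Psi.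
    rewrite E_fmu.
    rewrite (proof_irrelevance (R x y) r
       (R_cmp (R_cmp (R_of (lu y)) (R_ten (R_tors tt) (R_of (idm y)))) (R_of f))).
    rewrite !Ecmp.
    assert (ET : @fm _ _ d'' _ _ (R_ten (R_tors tt) (R_of (idm y)))
        = fmu d'' unitob y ∘ tenm (@fm _ _ d'' _ _ (R_tors tt)) (@fm _ _ d'' _ _ (R_of (idm y)))
          ∘ inv (fmu d'' t y)).
    { rewrite Eten, iRa. reflexivity. }
    rewrite ET, Eth, Eid. rewrite <- tm_l. nrm.
    apply cong_r, cong_r, cong_r. symmetry. exact (Elu y). }
  assert (E_fmu2 : fmu (compF d'' (pfun G)) = fmu d'').
  { apply functional_extensionality_dep; intro a.
    apply functional_extensionality_dep; intro b. apply E_fmu. }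
  rewrite E_fm, E_fe, E_fmu2. reflexivity.
Qed.

Lemma cokernel_part (G : SG) : theta_cokernel (tfun G) (FSG G) (pfun G) (thetaG G).
Proof.
  split. apply pfun_smf. split. apply thetaG_theta.
  intros D d psi Hd Hpsi.
  exists (dprime G D d psi). split.
  - split. apply dprime_smf; assumption. split. apply dprime_fac; assumption.
    apply dprime_theta; assumption.
  - intros d'' Hs Hc Hex. subst d. apply dprime_uniq; assumption.
Qed.

Theorem proposition11p2 :
  (forall (T F : SG) (G : Fun T F),
      is_torsion T -> is_torsion_free F -> is_smf G ->
      exists phi : ThetaData G,
        is_theta G phi /\ forall psi : ThetaData G, is_theta G psi -> psi = phi) /\
  (forall G : SG,
      exists (T F : SG) (t : Fun T G) (p : Fun G F) (theta : ThetaData (compF p t)),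
        is_torsion T /\ is_torsion_free F /\ theta_exact t p theta).
Proof.
  split. exact part1.
  intro G. exists (TSG G), (FSG G), (tfun G), (pfun G), (thetaG G).
  split. apply TSG_tors. split. apply FSG_tf.
  split. apply kernel_part. apply cokernel_part.
Qed.
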